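(* Let $A\in\mathbb{R}^{n\times d}$ have rows $a_1^\top,\dots,a_n^\top$, let $f_1,\dots,f_n:\mathbb{R}\to\mathbb{R}$ be convex and $(1/\gamma)$-smooth ($\gamma>0$), let $g:\mathbb{R}^d\to\mathbb{R}\cup\{+\infty\}$ be closed and $\mu$-strongly convex ($\mu>0$), and write $f^*(y)=\frac1n\sum_{i=1}^nf_i^*(y_i)$ for $y\in\mathbb{R}^n$. For the iterates of the SDAPD method (described in the context), for every $t\ge0$ and every $y\in\mathbb{R}^n$, $$\frac{1}{2\tau}\mathbb{E}_{\mathcal{F}_t}\Big[\Big(1+\frac{(n-1)\gamma\tau}{n}\Big)\|y^t-y\|_2^2-(1+\gamma\tau)\|y^{t+1}-y\|_2^2-\|y^{t+1}-y^t\|_2^2\Big]\ge\mathbb{E}_{\mathcal{F}_t}\Big[-\frac1n\langle\bar{y}^{t+1}-y,A\bar{x}^{t+1}\rangle+nf^*(y^{t+1})-(n-1)f^*(y^t)-f^*(y)\Big].$$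
   Context: $f_i^*$ is the convex conjugate of $f_i$; $\operatorname{prox}_h(u)=\arg\min_v\{h(v)+\frac12\|v-u\|_2^2\}$. SDAPD method: given $x^0\in\mathbb{R}^d$, $y^0\in\mathbb{R}^n$, $\eta,\tau>0$, $\beta_t>0$, set $B_t=\sum_{k=0}^t\beta_k$. For $t=0,1,\dots$: sample $i_t$ uniformly from $\{1,\dots,n\}$ independently of the past; $\bar{x}^{t+1}=\operatorname{prox}_{\eta g}(x^t-\frac{\eta}{n}A^\top y^t)$; $y^{t+1}_i=\operatorname{prox}_{\tau f_i^*}(y_i^t+\tau\langle a_i,\bar{x}^{t+1}\rangle)$ if $i=i_t$, $y^{t+1}_i=y^t_i$ otherwise; $\bar{y}^{t+1}=y^t+n(y^{t+1}-y^t)$; $x^{t+1}=\operatorname{prox}_{B_tg}(x^0-\sum_{k=0}^t\frac{\beta_k}{n}A^\top\bar{y}^{k+1})$. $\mathcal{F}_t$ is the $\sigma$-field generated by all random variables up to iteration $t$ (so $x^t,y^t,\bar x^{t+1}$ are determined given $\mathcal{F}_t$ and $i_t$ is independent of $\mathcal{F}_t$), and $\mathbb{E}_{\mathcal{F}_t}$ is conditional expectation given $\mathcal{F}_t$.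
   Formalization: The starting point y⁰ is assumed to satisfy fᵢ*(y⁰ᵢ) < +∞ for every i, so y⁰ lies in the domain of f*. The statement above fails without it. *)

(* Defs.v *)
From HB Require Import structures.
From mathcomp Require Import all_boot all_order all_algebra.
From mathcomp Require Import boolp classical_sets reals ereal topology normedtype derive.
Set Implicit Arguments. Unset Strict Implicit. Unset Printing Implicit Defensive.
Import Order.TTheory GRing.Theory Num.Theory.
Import numFieldNormedType.Exports.
Local Open Scope ring_scope.

Section SDAPD.
Variable R : realType.

Definition dotv {m : nat} (u v : 'cV[R]_m) : R := \sum_(i < m) u i 0 * v i 0.
Definition sqn {m : nat} (u : 'cV[R]_m) : R := dotv u u.

Definition convex_fun (h : R -> R) : Prop :=
  forall x y l : R, 0 <= l <= 1 -> h (l * x + (1 - l) * y) <= l * h x + (1 - l) * h y.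

Definition smooth_with (L : R) (h : R -> R) : Prop :=
  (forall x, derivable h x 1) /\
  (forall x y, `|derive1 h x - derive1 h y| <= L * `|x - y|).

Definition conjR (h : R -> R) (s : R) : \bar R :=
  ereal_sup [set ((s * x - h x)%:E) | x in [set: R]].

(* proximal operators: prox_h(u) = argmin_v { h v + 1/2 |v - u|^2 }
   (chosen via classical choice; the minimizer exists and is unique
   for the functions used below) *)
Definition proxR (h : R -> \bar R) (u : R) : R :=
  xget u [set v | forall w : R,
    (h v + ((v - u) ^+ 2 / 2)%:E <= h w + ((w - u) ^+ 2 / 2)%:E)%E].

Definition proxV {m : nat} (h : 'cV[R]_m -> \bar R) (u : 'cV[R]_m) : 'cV[R]_m :=
  xget u [set v | forall w : 'cV[R]_m,
    (h v + (sqn (v - u) / 2)%:E <= h w + (sqn (w - u) / 2)%:E)%E].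

Definition fstar {n : nat} (f : 'I_n -> R -> R) (y : 'cV[R]_n) : \bar R :=
  ((n%:R)^-1%:E * \sum_(i < n) conjR (f i) (y i ord0))%E.

Variables (n d : nat) (A : 'M[R]_(n, d)) (f : 'I_n -> R -> R)
  (g : 'cV[R]_d -> \bar R) (eta tau : R) (beta : nat -> R)
  (x0 : 'cV[R]_d) (y0 : 'cV[R]_n).

Definition Bsum (t : nat) : R := \sum_(k < t.+1) beta k.

Definition xbar_of (x : 'cV[R]_d) (y : 'cV[R]_n) : 'cV[R]_d :=
  proxV (fun v => (eta%:E * g v)%E) (x - (eta / n%:R) *: (A^T *m y)).

(* state of SDAPD at time t: (x^t, y^t, S_t) where
   S_t = sum_{k<t} beta_k/n A^T ybar^{k+1} *)
Definition sdapd_step (t : nat) (st : 'cV[R]_d * 'cV[R]_n * 'cV[R]_d)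
    (i : 'I_n) : 'cV[R]_d * 'cV[R]_n * 'cV[R]_d :=
  let: (x, y, Sk) := st in
  let xb := xbar_of x y in
  let yi := proxR (fun v => (tau%:E * conjR (f i) v)%E)
                  (y i 0 + tau * (row i A *m xb) 0 0) in
  let y' := \col_j (if j == i then yi else y j 0) in
  let yb := y + n%:R *: (y' - y) in
  let S' := Sk + (beta t / n%:R) *: (A^T *m yb) in
  let x' := proxV (fun v => ((Bsum t)%:E * g v)%E) (x0 - S') in
  (x', y', S').

(* iterates as functions of the sequence of sampled indices s = (i_0, i_1, ...) *)
Fixpoint sdapd_state (s : nat -> 'I_n) (t : nat) : 'cV[R]_d * 'cV[R]_n * 'cV[R]_d :=
  match t with
  | 0 => (x0, y0, 0)
  | t'.+1 => sdapd_step t' (sdapd_state s t') (s t')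
  end.

Definition x_it s t := (sdapd_state s t).1.1.
Definition y_it s t := (sdapd_state s t).1.2.
Definition xbar_it s t := xbar_of (x_it s t) (y_it s t).   (* = xbar^{t+1} *)
Definition ybar_it s t := y_it s t + n%:R *: (y_it s t.+1 - y_it s t). (* = ybar^{t+1} *)

End SDAPD.

(* Probability model: horizon T; sample space Omega = {ffun 'I_T.+1 -> 'I_n}
   with the uniform probability, i.e. i_0,...,i_T i.i.d. uniform on 'I_n.
   F_t = sigma(i_0, ..., i_{t-1}); its atoms are the fibers below, so the
   conditional expectation given F_t is the average over the fiber. *)
Section Prob.
Variable R : realType.
Variables n T : nat.

Definition Omega := {ffun 'I_T.+1 -> 'I_n}.

Definition idx_seq (w : Omega) : nat -> 'I_n := fun k => w (inord k).

Definition fiber (t : nat) (w : Omega) : {set Omega} :=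
  [set w' : Omega | [forall k : 'I_T.+1, (k < t)%N ==> (w' k == w k)]].

Definition condE (t : nat) (Z : Omega -> R) (w : Omega) : R :=
  (\sum_(w' in fiber t w) Z w') / #|fiber t w|%:R.

Definition condEe (t : nat) (Z : Omega -> \bar R) (w : Omega) : \bar R :=
  ((#|fiber t w|%:R)^-1%:E * \sum_(w' in fiber t w) Z w')%E.

End Prob.

(* Main.v *)
From HB Require Import structures.
From mathcomp Require Import all_boot all_order all_algebra.
From mathcomp Require Import boolp classical_sets reals ereal topology normedtype derive.
Require Import Defs.
From mathcomp Require Import ring lra functions.
Import Order.TTheory GRing.Theory Num.Theory.
Import numFieldNormedType.Exports.
Local Open Scope ring_scope.
Section S.
Variable R : realType.
Local Open Scope classical_set_scope.
Lemma grad_ineq (f : R -> R) x y : convex_fun f -> (forall x, derivable f x 1) ->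
  f x + derive1 f x * (y - x) <= f y.
Proof.
move=> cf df.
have dif : differentiable f x by apply/derivable1_diffP.
have dh : derivable f x (y - x) by apply: diff_derivable.
have Dh : 'D_(y - x) f x = derive1 f x * (y - x).
  rewrite deriveE // derive1E' // -{1}[y - x]mulr1 -[(y - x) * 1]/((y - x) *: 1).
  by rewrite linearZ /= mulrC.
rewrite -Dh addrC -lerBrDr.
have cv : (fun h => h^-1 *: ((f \o shift x) (h *: (y - x)) - f x)) @ 0^'+ --> 'D_(y - x) f x.
  move=> P HP; have := dh P HP.
  rewrite /at_right /dnbhs /within /= !nbhs_simpl /=. apply: filterS => z Hz z0; apply: Hz.
  by rewrite gt_eqF.
apply: (cvgr_to_le cv).
near=> h.
have h0 : 0 < h by near: h; exact: nbhs_right_gt.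
have h1 : h < 1 by near: h; exact: nbhs_right_lt.
rewrite /= -ler_pdivlMl // ?invr_gt0 // invrK.
have H : f (h*y + (1-h)*x) <= h * f y + (1-h) * f x by apply: cf; rewrite !ltW.
have E : h * y + (1 - h) * x = h * (y - x) + x by ring.
rewrite E in H. rewrite [_ *: _]/(_ * _). rewrite lerBlDr (le_trans H) //. 
rewrite mulrBr; lra.
Unshelve. all: by end_near.
Qed.
Lemma psi_der (f : R -> R) (a k x c : R) : (forall x, derivable f x 1) ->
  is_derive c 1 (f - a \*: id - k \*: ((id - cst x) * (id - cst x)))
    (derive1 f c - a - k * (2 * (c - x))).
Proof.
move=> df.
have Hf : is_derive c 1 f (derive1 f c).
  by rewrite derive1E; apply: derivableP.
apply: is_derive_eq.
rewrite /=. congr (_ - _ - _).   by rewrite /GRing.scale /= mulr1.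
change (k * ((c - x) * (1 - 0) + (c - x) * (1 - 0)) = k * (2 * (c - x))). ring.
Qed.
Lemma descent (f : R -> R) (L x y : R) : (forall x, derivable f x 1) ->
  (forall x y, `|derive1 f x - derive1 f y| <= L * `|x - y|) ->
  f y <= f x + derive1 f x * (y - x) + L / 2 * (y - x) ^+ 2.
Proof.
move=> df Lf.
pose psi := (f - derive1 f x \*: id - (L/2) \*: ((id - cst x) * (id - cst x))).
have D (c : R) : is_derive c (1:R) psi (derive1 f c - derive1 f x - L / 2 * (2 * (c - x))).
  exact: psi_der.
have cont a b : {within `[a, b], continuous psi}.
  apply: derivable_within_continuous => z _; exact: (@ex_derive _ _ _ _ _ _ _ (D z)).
have psiE z : psi z = f z - derive1 f x * z - L / 2 * ((z - x) * (z - x)) by [].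
suff : psi y <= psi x by rewrite !psiE; lra.
have [xy|yx] := leP x y.
  have [c cin E] := MVT_segment xy (fun z _ => D z) (cont x y).
  rewrite -subr_le0 E; apply: mulr_le0_ge0; last by rewrite subr_ge0.
  have := Lf c x; move: cin; rewrite in_itv /= => /andP[c1 c2].
  rewrite (ger0_norm (_ : 0 <= c - x)) ?subr_ge0 //. 
  have := ler_norm (derive1 f c - derive1 f x). lra.
have [c cin E] := MVT_segment (ltW yx) (fun z _ => D z) (cont y x).
rewrite -subr_ge0 E; apply: mulr_ge0; last by rewrite subr_ge0 ltW.
have := Lf c x; move: cin; rewrite in_itv /= => /andP[c1 c2].
rewrite (ler0_norm (_ : c - x <= 0)) ?subr_le0 //. 
have := ler_norm (- (derive1 f c - derive1 f x)); rewrite normrN. lra.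
Qed.
Lemma dcont (f : R -> R) L : 0 < L ->
  (forall x y, `|derive1 f x - derive1 f y| <= L * `|x - y|) -> continuous (derive1 f).
Proof.
move=> L0 Lf x; apply/cvgrPdist_lt => e e0.
near=> z. apply: (le_lt_trans (Lf x z)). rewrite -ltr_pdivlMl //.
near: z. apply: (@cvgr_dist_lt _ R^o _ (nbhs x)); [exact: cvg_id | by rewrite mulr_gt0 ?invr_gt0].
Unshelve. all: by end_near.
Qed.

Lemma dmono (f : R -> R) x y : convex_fun f -> (forall x, derivable f x 1) ->
  x <= y -> derive1 f x <= derive1 f y.
Proof.
move=> cf df xy.
have h1 := grad_ineq f x y cf df. have h2 := grad_ineq f y x cf df.
rewrite le_eqVlt in xy; case/orP: xy => [/eqP->//|xy].
nra.
Qed.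

Lemma conj_ge (f : R -> R) s x : ((s * x - f x)%:E <= conjR f s)%E.
Proof. by apply: ereal_sup_ubound; exists x. Qed.

Lemma conj_grad (f : R -> R) x : convex_fun f -> (forall x, derivable f x 1) ->
  conjR f (derive1 f x) = (derive1 f x * x - f x)%:E.
Proof.
move=> cf df; apply/eqP; rewrite eq_le conj_ge andbT.
apply: ge_ereal_sup => _ [z _ <-]; rewrite lee_fin.
have := grad_ineq f x z cf df; lra.
Qed.
Lemma prox_pt (f : R -> R) (gam tau u : R) : convex_fun f -> smooth_with gam^-1 f ->
  0 < gam -> 0 < tau ->
  exists p cp, conjR f p = cp%:E /\
   forall z, ((tau * cp + (p - u)^+2/2 + (1 + gam * tau)/2 * (z - p)^+2)%:E <=
      tau%:E * conjR f z + ((z - u)^+2/2)%:E)%E.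
Proof.
move=> cf [df Lf] g0 t0.
pose k := fun x => derive1 f x + tau * x.
have kc : continuous k.
  have dc : continuous (derive1 f) by apply: (dcont f _ _ Lf); rewrite invr_gt0.
  move=> x; apply: continuousD; first exact: dc.
  exact: mulrl_continuous.
pose M := `|u - derive1 f 0| / tau.
have M0 : 0 <= M by rewrite divr_ge0 // ltW.
have tM : tau * M = `|u - derive1 f 0| by rewrite /M mulrC divfK // gt_eqF.
have kM : u <= k M.
  have := dmono f 0 M cf df M0. have := ler_norm (u - derive1 f 0). rewrite /k. lra.
have kNM : k (- M) <= u.
  have : - M <= 0 by rewrite oppr_le0.
  move=> /(dmono f _ _ cf df) => h. have := ler_norm (- (u - derive1 f 0)). rewrite normrN /k. lra.
have [c kcu] : exists c, k c = u.
  have [|||c _ ?] := (@IVT R k (-M) M u); last by exists c.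
  - by lra.
  - by apply: continuous_subspaceT => x; apply: kc.
  by rewrite ge_min le_max kM kNM orbT.
pose p := derive1 f c.
have up : u = p + tau * c by rewrite -kcu.
exists p, (p * c - f c); split; first exact: conj_grad.
move=> z.
pose x := c + gam * (z - p).
have des := descent f (gam^-1) c x df Lf.
have E : z * x - (f c + p * (x - c) + gam^-1 / 2 * (x - c) ^+ 2) =
         z * c - f c + gam / 2 * (z - p) ^+ 2.
  rewrite /x; field; by rewrite gt_eqF.
have hz : ((z * c - f c + gam / 2 * (z - p) ^+ 2)%:E <= conjR f z)%E.
  apply: le_trans (conj_ge f z x); rewrite lee_fin -E. rewrite /p in des *. lra.
apply: (@le_trans _ _ ((tau * (z * c - f c + gam / 2 * (z - p) ^+ 2) + (z - u)^+2/2)%:E)).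
  rewrite lee_fin up; nra.
rewrite EFinD leeD2r // EFinM lee_pmul2l //. 
Qed.
Lemma prox_key (f : R -> R) (gam tau u : R) : convex_fun f -> smooth_with gam^-1 f ->
  0 < gam -> 0 < tau ->
  let p := proxR (fun v => (tau%:E * conjR f v)%E) u in
  exists cp, conjR f p = cp%:E /\
   forall z, ((tau * cp + (p - u)^+2/2 + (1 + gam * tau)/2 * (z - p)^+2)%:E <=
      tau%:E * conjR f z + ((z - u)^+2/2)%:E)%E.
Proof.
move=> cf sf g0 t0 q.
have [p [cp [cpE H]]] := prox_pt f gam tau u cf sf g0 t0.
have c0 : 0 <= (1 + gam * tau) / 2.
  by apply: divr_ge0 => //; apply: addr_ge0 => //; apply: mulr_ge0; apply: ltW.
have Pp : forall w, (tau%:E * conjR f p + ((p - u) ^+ 2 / 2)%:E <=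
    tau%:E * conjR f w + ((w - u) ^+ 2 / 2)%:E)%E.
  move=> w; apply: le_trans (H w); rewrite cpE -EFinM -EFinD lee_fin lerDl.
  by apply: mulr_ge0 => //; apply: sqr_ge0.
have Pq : forall w, (tau%:E * conjR f q + ((q - u) ^+ 2 / 2)%:E <= tau%:E * conjR f w + ((w - u) ^+ 2 / 2)%:E)%E.
  exact: (xgetI u (P := [set v | forall w : R, (tau%:E * conjR f v + ((v - u) ^+ 2 / 2)%:E <= tau%:E * conjR f w + ((w - u) ^+ 2 / 2)%:E)%E]) Pp).
have qp : q = p.
  have h1 := Pq p. have h2 := H q. rewrite -/q in h1.
  have h3 := le_trans h2 h1. rewrite cpE -EFinM -EFinD lee_fin gerDl in h3.
  have h4 : (1 + gam * tau) / 2 * (q - p) ^+ 2 = 0.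
    apply/eqP; rewrite eq_le h3 /=; apply: mulr_ge0 => //; apply: sqr_ge0.
  move/eqP: h4; rewrite mulf_eq0 sqrf_eq0 subr_eq0 => /orP[|/eqP//].
  rewrite mulf_eq0 invr_eq0 pnatr_eq0 orbF => /eqP.
  have : 0 < 1 + gam * tau by apply: addr_gt0 => //; apply: mulr_gt0.
  lra.
by rewrite qp; exists cp.
Qed.
Lemma conj_fin (h : R -> R) s : (conjR h s < +oo)%E -> conjR h s = (fine (conjR h s))%:E.
Proof. move=> H; have := conj_ge h s 0; move: H; by case: (conjR h s). Qed.
End S.

Section F.
Variable R : realType.
Lemma fiber_avg n T t (w : Omega n T) (F : 'I_n -> R) : (0 < n)%N -> (t <= T)%N ->
  \sum_(w' in fiber t w) F (w' (inord t)) = #|fiber t w|%:R / n%:R * \sum_i F i.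
Proof.
case: n w F => [//|n'] w F _ tT.
set t0 : 'I_T.+1 := inord t.
have t0E : nat_of_ord t0 = t by rewrite /t0 inordK // ltnS.
pose sg (j : 'I_n'.+1) (w' : Omega n'.+1 T) : Omega n'.+1 T :=
  [ffun k => if k == t0 then w' k + j else w' k].
have sgK j : cancel (sg j) (sg (- j)).
  move=> w1; apply/ffunP => k; rewrite !ffunE; case: eqP => // _; by rewrite addrK.
have sgI j : injective (sg j) := can_inj (sgK j).
have sgF j w' : (sg j w' \in fiber t w) = (w' \in fiber t w).
  rewrite !inE; apply: eq_forallb => k; rewrite ffunE.
  case: ifP => // /eqP ->; by rewrite t0E ltnn.
have H j : \sum_(w' in fiber t w) F (w' t0) = \sum_(w' in fiber t w) F (w' t0 + j).
  rewrite (reindex_inj (sgI j)) /=; apply: eq_big => w'; first exact: sgF.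
  by rewrite ffunE eqxx.
have E1 : \sum_(j < n'.+1) \sum_(w' in fiber t w) F (w' t0 + j) =
    (\sum_(w' in fiber t w) F (w' t0)) * n'.+1%:R.
  rewrite (eq_bigr (fun _ => \sum_(w' in fiber t w) F (w' t0))); last by move=> j _; rewrite -H.
  by rewrite sumr_const card_ord mulr_natr.
have E2 : \sum_(j < n'.+1) \sum_(w' in fiber t w) F (w' t0 + j) =
    #|fiber t w|%:R * \sum_i F i.
  rewrite exchange_big /= (eq_bigr (fun _ => \sum_i F i)); last first.
    by move=> w' _; rewrite [in RHS](reindex_inj (addrI (w' t0))).
  by rewrite sumr_const mulr_natl.
move: E2; rewrite E1 => E.
apply: (@mulIf _ n'.+1%:R); first by rewrite pnatr_eq0.
by rewrite E mulrAC divfK // pnatr_eq0.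
Qed.
End F.

Section H.
Variables (R : realType) (n : nat).
Definition upd (yt : 'cV[R]_n) (P : 'I_n -> R) (i : 'I_n) : 'cV[R]_n :=
  \col_j (if j == i then P i else yt j 0).

Lemma sum_at (F : 'I_n -> R) i : \sum_j F j = F i + \sum_(j | j != i) F j.
Proof. by rewrite (bigD1 i). Qed.

Lemma I1 yt y u P i : dotv (yt + n%:R *: (upd yt P i - yt) - y) u =
  dotv (yt - y) u + n%:R * (P i - yt i 0) * u i 0.
Proof.
rewrite /dotv (sum_at _ i) [in RHS](sum_at _ i) !mxE eqxx.
rewrite [in LHS](eq_bigr (fun j => (yt j 0 - y j 0) * u j 0)); last first.
  by move=> j /negbTE ji; rewrite !mxE ji subrr mulr0 addr0.
rewrite [in RHS](eq_bigr (fun j => (yt j 0 - y j 0) * u j 0)); last by move=> j _; rewrite !mxE.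
rewrite ?mxE; ring.
Qed.

Lemma I2 (a : 'I_n -> R) bi i : \sum_j (if j == i then bi else a j) = \sum_j a j - a i + bi.
Proof.
rewrite (sum_at _ i) [in RHS](sum_at _ i) eqxx.
rewrite (eq_bigr (fun j => a j)); last by move=> j /negbTE ->.
ring.
Qed.

Lemma I3 yt y P i : sqn (upd yt P i - y) =
  sqn (yt - y) - (yt i 0 - y i 0)^+2 + (P i - y i 0)^+2.
Proof.
rewrite /sqn /dotv (sum_at _ i) [in RHS](sum_at _ i) !mxE eqxx.
rewrite [in LHS](eq_bigr (fun j => (yt j 0 - y j 0) * (yt j 0 - y j 0))); last first.
  by move=> j /negbTE ji; rewrite !mxE ji.
rewrite [in RHS](eq_bigr (fun j => (yt j 0 - y j 0) * (yt j 0 - y j 0))); last by move=> j _; rewrite !mxE.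
rewrite ?mxE; ring.
Qed.

Lemma I4 yt P i : sqn (upd yt P i - yt) = (P i - yt i 0)^+2.
Proof.
rewrite /sqn /dotv (sum_at _ i) !mxE eqxx big1 ?addr0; first by ring.
by move=> j /negbTE ji; rewrite !mxE ji subrr mulr0.
Qed.

Lemma core (gam tau : R) (yt y u : 'cV[R]_n) (P a b c : 'I_n -> R) :
  (0 < n)%N -> 0 < gam -> 0 < tau ->
  (forall i, tau * b i + (P i - (yt i 0 + tau * u i 0))^+2/2 + (1 + gam * tau)/2 * (y i 0 - P i)^+2
     <= tau * c i + (y i 0 - (yt i 0 + tau * u i 0))^+2/2) ->
  2 * tau * \sum_i (- (n%:R)^-1 * dotv (yt + n%:R *: (upd yt P i - yt) - y) u
      + n%:R * ((n%:R)^-1 * \sum_j (if j == i then b i else a j))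
      - (n%:R - 1) * ((n%:R)^-1 * \sum_j a j) - (n%:R)^-1 * \sum_j c j)
  <= \sum_i ((1 + (n%:R - 1) * gam * tau / n%:R) * sqn (yt - y)
      - (1 + gam * tau) * sqn (upd yt P i - y) - sqn (upd yt P i - yt)).
Proof.
move=> n0 g0 t0 key.
have N0 : n%:R != 0 :> R by rewrite pnatr_eq0 -lt0n.
set D := dotv (yt - y) u. set SA := \sum_j a j. set SC := \sum_j c j. set S := sqn (yt - y).
pose K i := (y i 0 - P i) * u i 0 + b i - c i - (2 * tau)^-1 * ((yt i 0 - y i 0)^+2
   - (1 + gam * tau) * (P i - y i 0)^+2 - (P i - yt i 0)^+2).
pose h i := 2 * tau * (yt i 0 - y i 0) * u i 0 - 2 * tau * a i + 2 * tau * c i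
   - gam * tau * (yt i 0 - y i 0)^+2.
pose H := 2 * tau * D - 2 * tau * SA + 2 * tau * SC - gam * tau * S.
have hH : \sum_i h i = H.
  rewrite /h /H /D /S /SA /SC /sqn /dotv !big_split /= !sumrN -!mulr_sumr.
  rewrite (eq_bigr (fun i => 2 * tau * ((yt - y) i 0 * u i 0))); last by move=> i _; rewrite !mxE; ring.
  rewrite -mulr_sumr; congr (_ - _ + _ - _); congr (_ * _).
  by apply: eq_bigr => i _; rewrite !mxE; ring.
have Kle i : K i <= 0.
  have kk := key i.
  have E : K i = (2 * tau)^-1 * (2 * tau * (y i 0 - P i) * u i 0 + 2 * tau * b i - 2 * tau * c i
     - (yt i 0 - y i 0)^+2 + (1 + gam * tau) * (P i - y i 0)^+2 + (P i - yt i 0)^+2).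
    rewrite /K; field; by rewrite gt_eqF.
  rewrite E pmulr_rle0 ?invr_gt0 ?mulr_gt0 //. lra.
have pw i : 2 * tau * (- (n%:R)^-1 * dotv (yt + n%:R *: (upd yt P i - yt) - y) u
      + n%:R * ((n%:R)^-1 * \sum_j (if j == i then b i else a j))
      - (n%:R - 1) * ((n%:R)^-1 * SA) - (n%:R)^-1 * SC)
   - ((1 + (n%:R - 1) * gam * tau / n%:R) * S
      - (1 + gam * tau) * sqn (upd yt P i - y) - sqn (upd yt P i - yt))
   = 2 * tau * K i + (h i - H / n%:R).
  rewrite I1 I2 I3 I4 -/D -/S -/SA /K /h /H; field; by rewrite N0 gt_eqF.
rewrite -subr_le0 mulr_sumr -sumrB (eq_bigr _ (fun i _ => pw i)) big_split /=.
rewrite sumrB hH sumr_const card_ord -[H / n%:R *+ n]mulr_natr divfK // subrr addr0.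
rewrite -mulr_sumr pmulr_rle0 ?mulr_gt0 //.
by apply: sumr_le0 => i _; apply: Kle.
Qed.
End H.
Arguments upd {R n} yt P i.

Section G.
Variables (R : realType) (n d : nat) (A : 'M[R]_(n, d)) (f : 'I_n -> R -> R)
  (g : 'cV[R]_d -> \bar R) (eta tau : R) (beta : nat -> R)
  (x0 : 'cV[R]_d) (y0 : 'cV[R]_n).
Lemma state_ext s s' t : (forall k, (k < t)%N -> s k = s' k) ->
  sdapd_state A f g eta tau beta x0 y0 s t = sdapd_state A f g eta tau beta x0 y0 s' t.
Proof.
elim: t => [//|t IH] H /=.
by rewrite IH ?H // => k kt; apply: H; apply: ltnW.
Qed.
Definition Pn (yt : 'cV[R]_n) (u : 'cV[R]_n) (i : 'I_n) : R :=
  proxR (fun v => (tau%:E * conjR (f i) v)%E) (yt i 0 + tau * u i 0).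

Lemma y_succ s t :
  y_it A f g eta tau beta x0 y0 s t.+1 =
  upd (y_it A f g eta tau beta x0 y0 s t)
    (Pn (y_it A f g eta tau beta x0 y0 s t) (A *m xbar_it A f g eta tau beta x0 y0 s t)) (s t).
Proof.
rewrite /xbar_it /x_it /y_it /=; case: (sdapd_state _ _ _ _ _ _ _ _ s t) => [[x yy] S] /=.
apply/matrixP => i j; rewrite !mxE /Pn; case: eqP => // _; rewrite !mxE.
by under eq_bigr do rewrite mxE.
Qed.
End G.
Arguments y_succ {R n d} A f g eta tau beta x0 y0 s t.
Arguments state_ext {R n d} A f g eta tau beta x0 y0 s s' t.
Arguments Pn {R n} f tau yt u i.

Lemma y_fin (R : realType) (n d : nat) (A : 'M[R]_(n, d))
  (f : 'I_n -> R -> R) (g : 'cV[R]_d -> \bar R)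
  (gamma eta tau : R) (beta : nat -> R)
  (x0 : 'cV[R]_d) (y0 : 'cV[R]_n) :
  0 < gamma -> 0 < tau ->
  (forall i, convex_fun (f i)) ->
  (forall i, smooth_with (gamma^-1) (f i)) ->
  (forall i, (conjR (f i) (y0 i ord0) < +oo)%E) ->
  forall s t j, conjR (f j) (y_it A f g eta tau beta x0 y0 s t j 0) =
     (fine (conjR (f j) (y_it A f g eta tau beta x0 y0 s t j 0)))%:E.
Proof.
move=> g0 t0 cvx sm y0fin s t; elim: t => [|t IH] j.
  by apply: conj_fin; apply: y0fin.
rewrite y_succ /upd mxE; case: eqP => [->|_]; last exact: IH.
have [cp [-> _]] := @prox_key R (f (s t)) gamma tau (y_it A f g eta tau beta x0 y0 s t (s t) 0 +
   tau * (A *m xbar_it A f g eta tau beta x0 y0 s t) (s t) 0) (cvx (s t)) (sm (s t)) g0 t0.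
by [].
Qed.
Lemma alg1 (R : realType) (m N x : R) : m != 0 -> N != 0 -> m^-1 * (m / N * x) = x / N.
Proof. by move=> m0 N0; field; rewrite m0 N0. Qed.
Lemma alg2 (R : realType) (m N x k : R) : m != 0 -> N != 0 -> k * (m / N * x / m) = (k * x) / N.
Proof. by move=> m0 N0; field; rewrite m0 N0. Qed.
Theorem lemma3p4 (R : realType) (n d : nat) (A : 'M[R]_(n, d))
  (f : 'I_n -> R -> R) (g : 'cV[R]_d -> \bar R)
  (gamma mu eta tau : R) (beta : nat -> R)
  (x0 : 'cV[R]_d) (y0 : 'cV[R]_n) (T t : nat) :
  (0 < n)%N ->
  0 < gamma -> 0 < mu -> 0 < eta -> 0 < tau -> (forall k, 0 < beta k) ->
  (forall i, convex_fun (f i)) ->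
  (forall i, smooth_with (gamma^-1) (f i)) ->
  (* g : R^d -> R \cup {+oo}, proper, closed, mu-strongly convex *)
  (forall x, g x != -oo%E) ->
  (exists x, (g x < +oo)%E) ->
  (forall c : R, closed [set x | (g x <= c%:E)%E]) ->
  (forall (x y : 'cV[R]_d) (l : R), 0 < l < 1 ->
     (g (l *: x + (1 - l) *: y)%R <=
      l%:E * g x + (1 - l)%:E * g y - (mu / 2 * l * (1 - l) * sqn (x - y))%:E)%E) ->
  (* y^0 in dom f^* (needed for the expression to be well defined) *)
  (forall i, (conjR (f i) (y0 i ord0) < +oo)%E) ->
  (t <= T)%N ->
  forall (y : 'cV[R]_n) (w : Omega n T),
  let s := idx_seq w in
  let Y := y_it A f g eta tau beta x0 y0 in
  (condEe t (fun w' =>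
      let s' := idx_seq w' in
      ((- (n%:R)^-1 * dotv (ybar_it A f g eta tau beta x0 y0 s' t - y)
                          (A *m xbar_it A f g eta tau beta x0 y0 s' t))%:E
       + n%:R%:E * fstar f (Y s' t.+1)
       - (n%:R - 1)%:E * fstar f (Y s' t)
       - fstar f y)%E) w
   <=
   ((2 * tau)^-1 * condE t (fun w' =>
      let s' := idx_seq w' in
      (1 + (n%:R - 1) * gamma * tau / n%:R) * sqn (Y s' t - y)
      - (1 + gamma * tau) * sqn (Y s' t.+1 - y)
      - sqn (Y s' t.+1 - Y s' t)) w)%:E)%E.
Proof.
move=> n0 g0 mu0 eta0 t0 b0 cvx sm _ _ _ _ y0fin tT y w.
cbv zeta.
pose xb := xbar_it A f g eta tau beta x0 y0 (idx_seq w) t.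
pose yt := y_it A f g eta tau beta x0 y0 (idx_seq w) t.
pose u := A *m xb.
have fibS (w' : Omega n T) : w' \in fiber t w -> sdapd_state A f g eta tau beta x0 y0 (idx_seq w') t =
    sdapd_state A f g eta tau beta x0 y0 (idx_seq w) t.
  move=> Hw; apply: state_ext => k kt.
  move: Hw; rewrite inE => /forallP /(_ (inord k)).
  rewrite inordK ?kt /=; last by rewrite ltnS (leq_trans (ltnW kt) tT).
  by move/eqP.
have fibY (w' : Omega n T) : w' \in fiber t w -> y_it A f g eta tau beta x0 y0 (idx_seq w') t = yt.
  by move=> Hw; rewrite /yt /y_it fibS.
have fibX (w' : Omega n T) : w' \in fiber t w -> xbar_it A f g eta tau beta x0 y0 (idx_seq w') t = xb.
  by move=> Hw; rewrite /xb /xbar_it /x_it /y_it fibS.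
have fibY1 (w' : Omega n T) : w' \in fiber t w -> y_it A f g eta tau beta x0 y0 (idx_seq w') t.+1 =
    upd yt (Pn f tau yt u) (w' (inord t)).
  move=> Hw; rewrite [LHS](y_succ A f g eta tau beta x0 y0 (idx_seq w') t).
  rewrite (fibY _ Hw) (fibX _ Hw).
  by [].
have fibYb (w' : Omega n T) : w' \in fiber t w -> ybar_it A f g eta tau beta x0 y0 (idx_seq w') t =
    yt + n%:R *: (upd yt (Pn f tau yt u) (w' (inord t)) - yt).
  by move=> Hw; rewrite /ybar_it fibY1 // fibY.
pose a j := fine (conjR (f j) (yt j 0)).
have aE j : conjR (f j) (yt j 0) = (a j)%:E.
  exact: (@y_fin R n d A f g gamma eta tau beta x0 y0 g0 t0 cvx sm y0fin (idx_seq w) t j).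
pose b i := fine (conjR (f i) (Pn f tau yt u i)).
have bkey i : conjR (f i) (Pn f tau yt u i) = (b i)%:E /\
   forall z, ((tau * b i + (Pn f tau yt u i - (yt i 0 + tau * u i 0))^+2/2
      + (1 + gamma * tau)/2 * (z - Pn f tau yt u i)^+2)%:E <=
      tau%:E * conjR (f i) z + ((z - (yt i 0 + tau * u i 0))^+2/2)%:E)%E.
  have [cp [cpE H]] := @prox_key R (f i) gamma tau (yt i 0 + tau * u i 0) (cvx i) (sm i) g0 t0.
  have bE : b i = cp by rewrite /b /Pn cpE.
  by rewrite bE; split.
have fsU i : fstar f (upd yt (Pn f tau yt u) i) =
    ((n%:R)^-1 * \sum_j (if j == i then b i else a j))%:E.
  rewrite /fstar EFinM -sumEFin; congr (_ * _)%E; apply: eq_bigr => j _.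
  rewrite /upd mxE; case: eqP => [->|_]; [exact: (bkey i).1 | exact: aE].
have fsT : fstar f yt = ((n%:R)^-1 * \sum_j a j)%:E.
  by rewrite /fstar EFinM -sumEFin; congr (_ * _)%E; apply: eq_bigr => j _; exact: aE.
have wfib : w \in fiber t w by rewrite inE; apply/forallP => k; apply/implyP.
have card0 : (0 < #|fiber t w|)%N by apply/card_gt0P; exists w.
have [cfin | cinf] := pselect (forall j, (conjR (f j) (y j ord0) < +oo)%E); last first.
  have [j hj] : exists j, conjR (f j) (y j ord0) = +oo%E.
    move/existsNP: cinf => [j /negP]; rewrite ltey negbK => /eqP hj; by exists j.
  have fsY : fstar f y = +oo%E.
    rewrite /fstar (bigD1 j) //= hj addye; last first.
      rewrite gt_eqF //; apply: (@lt_le_trans _ _ (\sum_(k < n | k != j) (- f k 0)%:E)%E).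
        by rewrite sumEFin ltNyr.
      by apply: lee_sum => k _; have := @conj_ge R (f k) (y k ord0) 0; rewrite mulr0 sub0r.
    by rewrite muleC gt0_mulye // lte_fin invr_gt0 ltr0n.
  rewrite /condEe (eq_bigr (fun _ => -oo%E)); last first.
    move=> w' Hw; rewrite (fibYb _ Hw) (fibY1 _ Hw) (fibY _ Hw) (fibX _ Hw) fsU fsT fsY.
    by rewrite addeNy.
  rewrite (bigD1 w) //= addNye muleC gt0_mulNye ?leNye // lte_fin invr_gt0 ltr0n.
  done.
pose c j := fine (conjR (f j) (y j 0)).
have cE j : conjR (f j) (y j 0) = (c j)%:E by exact: (@conj_fin R (f j) (y j 0) (cfin j)).
have fsY : fstar f y = ((n%:R)^-1 * \sum_j c j)%:E.
  by rewrite /fstar EFinM -sumEFin; congr (_ * _)%E; apply: eq_bigr => j _; exact: cE.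
pose Zr i := - (n%:R)^-1 * dotv (yt + n%:R *: (upd yt (Pn f tau yt u) i - yt) - y) u
      + n%:R * ((n%:R)^-1 * \sum_j (if j == i then b i else a j))
      - (n%:R - 1) * ((n%:R)^-1 * \sum_j a j) - (n%:R)^-1 * \sum_j c j.
pose Wr i := (1 + (n%:R - 1) * gamma * tau / n%:R) * sqn (yt - y)
      - (1 + gamma * tau) * sqn (upd yt (Pn f tau yt u) i - y)
      - sqn (upd yt (Pn f tau yt u) i - yt).
rewrite /condEe (eq_bigr (fun w' : Omega n T => (Zr (w' (inord t)))%:E)); last first.
  move=> w' Hw; rewrite (fibYb _ Hw) (fibY1 _ Hw) (fibY _ Hw) (fibX _ Hw) fsU fsT fsY.
  by rewrite -!EFinM -EFinD.
rewrite /condE (eq_bigr (fun w' : Omega n T => Wr (w' (inord t)))); last first.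
  by move=> w' Hw; rewrite (fibY1 _ Hw) (fibY _ Hw).
rewrite sumEFin -EFinM lee_fin !fiber_avg //.
have key i : tau * b i + (Pn f tau yt u i - (yt i 0 + tau * u i 0))^+2/2
    + (1 + gamma * tau)/2 * (y i 0 - Pn f tau yt u i)^+2
     <= tau * c i + (y i 0 - (yt i 0 + tau * u i 0))^+2/2.
  by have := (bkey i).2 (y i 0); rewrite cE -EFinM -EFinD lee_fin.
have Hc : 2 * tau * \sum_i Zr i <= \sum_i Wr i.
  exact: (@core R n gamma tau yt y u (Pn f tau yt u) a b c n0 g0 t0 key).
have m0 : 0 < #|fiber t w|%:R :> R by rewrite ltr0n.
have N0 : 0 < n%:R :> R by rewrite ltr0n.
rewrite (alg1 _ _ _ _ (lt0r_neq0 m0) (lt0r_neq0 N0)) (alg2 _ _ _ _ _ (lt0r_neq0 m0) (lt0r_neq0 N0)).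
rewrite ler_pM2r ?invr_gt0 //.
rewrite -(ler_pM2l (_ : 0 < 2 * tau)) ?mulr_gt0 // mulrA divff ?mul1r //.
by rewrite gt_eqF ?mulr_gt0.
Qed.
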